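(* Let $X$ be a real Banach space and $T:X\rightrightarrows X^*$ maximal monotone. The following are equivalent: 1. $D(T)$ is bounded; 2. for every $h\in\mathcal{F}_T$, $P_1(D(h))$ is bounded; 3. there exists $h\in\mathcal{F}_T$ with $P_1(D(h))$ bounded; 4. the functions $h(x,\cdot):X^*\to\mathbb{R}\cup\{\pm\infty\}$, for $h\in\mathcal{F}_T$ lower semicontinuous in the strong$\times$weak-$*$ topology and $x\in P_1D(h)$, are all real-valued and there is $0\leq L<\infty$ with $|h(x,x^* )-h(x,z^* )|\leq L\|x^*-z^*\|$ for all such $h$ and $x$ and all $x^*,z^*\in X^*$; 5. there exists $h\in\mathcal{F}_T$, lower semicontinuous in the strong$\times$weak-$*$ topology, such that the functions $h(x,\cdot)$, $x\in P_1D(h)$, are all real-valued and there is $0\leq L<\infty$ with $|h(x,x^* )-h(x,z^* )|\leq L\|x^*-z^*\|$ for all $x\in P_1D(h)$, $x^*,z^*\in X^*$.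
   Context: An operator $T:X\rightrightarrows X^*$ is a subset of $X\times X^*$, with domain $D(T)$ its projection onto $X$; $T$ is monotone if $\langle x-y,x^*-y^*\rangle\geq0$ for all $(x,x^* ),(y,y^* )\in T$, and maximal monotone if it is monotone and not properly contained in another monotone operator. $\mathcal{F}_T$ is the set of all convex lower semicontinuous (in the norm topology) $h:X\times X^*\to\mathbb{R}\cup\{\pm\infty\}$ with $h(x,x^* )\geq\langle x,x^*\rangle$ for all $(x,x^* )$ and equality on $T$. ''Strong$\times$weak-$*$'' is the product of the norm topology on $X$ and the weak-$*$ topology on $X^*$. $P_1,P_2$ are the canonical projections of $X\times X^*$ onto $X$ and $X^*$; $D(h)=\{z\;|\;h(z)<\infty\}$. *)

(* Defs.v *)
From HB Require Import structures.
From mathcomp Require Import all_boot all_order all_algebra.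
From mathcomp Require Import all_classical all_reals all_analysis.
Set Implicit Arguments. Unset Strict Implicit. Unset Printing Implicit Defensive.
Import Order.TTheory GRing.Theory Num.Theory.
Import numFieldNormedType.Exports.
Local Open Scope classical_set_scope.
Local Open Scope ring_scope.

(* X is a real normed space; its dual X^* is represented as the set of
   continuous linear functionals f : X -> R. *)

Section MonotoneDefs.
Variables (R : realType) (X : normedModType R).

Definition dual_elt (f : X -> R) : Prop :=
  (forall (a : R) (x y : X), f (a *: x + y) = a * f x + f y) /\ continuous f.

Definition dual_norm (f : X -> R) : R :=
  sup [set `|f x| | x in [set x : X | `|x| <= 1]].

Definition dsub (f g : X -> R) : X -> R := fun y => f y - g y.

(* an operator T : X => X^* is a subset of X x X^* *)
Definition operator (T : set (X * (X -> R))) : Prop :=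
  forall z, T z -> dual_elt z.2.

Definition domain (T : set (X * (X -> R))) : set X :=
  [set x | exists xs, T (x, xs)].

Definition monotone (T : set (X * (X -> R))) : Prop :=
  forall x xs y ys, T (x, xs) -> T (y, ys) -> 0 <= xs (x - y) - ys (x - y).

Definition maximal_monotone (T : set (X * (X -> R))) : Prop :=
  operator T /\ monotone T /\
  forall S : set (X * (X -> R)), operator S -> monotone S -> T `<=` S -> S = T.

(* convexity of h : X x X^* -> [-oo,+oo] (convexity of its epigraph) *)
Definition convex_fn (h : X -> (X -> R) -> \bar R) : Prop :=
  forall x1 xs1 x2 xs2 (t1 t2 l : R),
    dual_elt xs1 -> dual_elt xs2 ->
    (h x1 xs1 <= t1%:E)%E -> (h x2 xs2 <= t2%:E)%E -> 0 <= l <= 1 ->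
    (h (l *: x1 + (1 - l) *: x2)%R (fun y => l * xs1 y + (1 - l) * xs2 y)%R
      <= (l * t1 + (1 - l) * t2)%:E)%E.

Definition lsc_strong (h : X -> (X -> R) -> \bar R) : Prop :=
  forall x0 xs0 (t : R), dual_elt xs0 -> (t%:E < h x0 xs0)%E ->
    exists eps : R, 0 < eps /\
      forall x xs, dual_elt xs -> `|x - x0| < eps ->
        dual_norm (dsub xs xs0) < eps -> (t%:E < h x xs)%E.

(* lower semicontinuity w.r.t. the (norm of X) x (weak-* of X^* ) topology;
   basic weak-* neighbourhoods are given by finitely many points ys and eps *)
Definition lsc_strong_weakstar (h : X -> (X -> R) -> \bar R) : Prop :=
  forall x0 xs0 (t : R), dual_elt xs0 -> (t%:E < h x0 xs0)%E ->
    exists (eps : R) (ys : seq X), 0 < eps /\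
      forall x xs, dual_elt xs -> `|x - x0| < eps ->
        (forall y, y \in ys -> `|xs y - xs0 y| < eps) -> (t%:E < h x xs)%E.

Definition fitz_family (T : set (X * (X -> R))) (h : X -> (X -> R) -> \bar R)
  : Prop :=
  convex_fn h /\ lsc_strong h /\
  (forall x xs, dual_elt xs -> ((xs x)%:E <= h x xs)%E) /\
  (forall x xs, T (x, xs) -> h x xs = (xs x)%:E).

Definition P1D (h : X -> (X -> R) -> \bar R) : set X :=
  [set x | exists xs, dual_elt xs /\ (h x xs < +oo)%E].

Definition real_lip (L : R) (h : X -> (X -> R) -> \bar R) : Prop :=
  forall x, P1D h x ->
    (forall xs, dual_elt xs -> h x xs \is a fin_num) /\
    (forall xs zs, dual_elt xs -> dual_elt zs ->
       (`|h x xs - h x zs| <= (L * dual_norm (dsub xs zs))%:E)%E).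

End MonotoneDefs.

(* Main.v *)
Require Import Defs.
From HB Require Import structures.
From mathcomp Require Import all_boot all_order all_algebra.
From mathcomp Require Import all_classical all_reals all_analysis.
From mathcomp Require Import ring lra.
Import Order.TTheory GRing.Theory Num.Theory.
Import numFieldNormedType.Exports.
Local Open Scope classical_set_scope.
Local Open Scope ring_scope.
Set Implicit Arguments. Unset Strict Implicit. Unset Printing Implicit Defensive.

Section HBsec.
Variables (R : realType) (V : lmodType R).

Definition sublin (q : V -> R) :=
  (forall u v, q (u + v) <= q u + q v) /\
  (forall (a : R) v, 0 <= a -> q (a *: v) = a * q v).
Definition linf (l : V -> R) := forall (a : R) u v, l (a *: u + v) = a * l u + l v.

Lemma sublin0 q : sublin q -> q 0 = 0.
Proof. by move=> [_ H]; have := H 0 0 (lexx 0); rewrite scale0r mul0r. Qed.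

Lemma sublin_lb q u : sublin q -> - q (- u) <= q u.
Proof.
move=> sq; have := sq.1 u (- u); rewrite subrr (sublin0 sq) => h.
by rewrite lerNl -subr_ge0 opprK addrC.
Qed.

Lemma inf_le_mem (S : set R) b x : (forall y, S y -> b <= y) -> S x -> inf S <= x.
Proof. by move=> hb Sx; apply: ge_inf => //; exists b. Qed.

Lemma le_inf_all (S : set R) a : S !=set0 -> (forall y, S y -> a <= y) -> a <= inf S.
Proof. by move=> ne ha; apply: lb_le_inf. Qed.

Definition shiftS (q : V -> R) (w1 : V) (c : R) (w : V) := [set r | exists2 t : R, 0 <= t & r = q (w + t *: w1) - t * c].
Definition shiftq (q : V -> R) (w1 : V) (c : R) := fun w => inf (shiftS q w1 c w).

Section shift.
Variables (q : V -> R) (w1 : V) (c : R).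
Hypotheses (sq : sublin q) (cq : c <= q w1).

Lemma shiftS_lb w y : shiftS q w1 c w y -> - q (- w) <= y.
Proof.
case=> t t0 ->.
have h1 := sq.1 (w + t *: w1) (- w).
rewrite addrC addKr in h1.
have h2 : t * c <= q (t *: w1) by rewrite sq.2 // ler_wpM2l.
lra.
Qed.

Lemma shiftS_ne w : shiftS q w1 c w !=set0.
Proof. by exists (q w); exists 0 => //; rewrite scale0r addr0 mul0r subr0. Qed.

Lemma shiftq_le w : shiftq q w1 c w <= q w.
Proof.
apply: (inf_le_mem (b := - q (- w))); first exact: shiftS_lb.
by exists 0 => //; rewrite scale0r addr0 mul0r subr0.
Qed.

Lemma shiftq_ge w : - q (- w) <= shiftq q w1 c w.
Proof. by apply: le_inf_all; [exact: shiftS_ne | exact: shiftS_lb]. Qed.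

Lemma shiftq_mem w y : shiftS q w1 c w y -> shiftq q w1 c w <= y.
Proof. by apply: inf_le_mem; exact: shiftS_lb. Qed.

Lemma shiftq_w1 : shiftq q w1 c (- w1) <= - c.
Proof.
have -> : - c = q (- w1 + 1 *: w1) - 1 * c.
  by rewrite scale1r addNr (sublin0 sq) mul1r sub0r.
by apply: shiftq_mem; exists 1.
Qed.

Lemma shiftq_sublin : sublin (shiftq q w1 c).
Proof.
split.
  move=> u v.
  suff : shiftq q w1 c (u + v) - shiftq q w1 c v <= shiftq q w1 c u by lra.
  apply: le_inf_all; first exact: shiftS_ne.
  move=> x [t1 t10 ->].
  suff : shiftq q w1 c (u + v) - (q (u + t1 *: w1) - t1 * c) <= shiftq q w1 c v by lra.
  apply: le_inf_all; first exact: shiftS_ne.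
  move=> y [t2 t20 ->].
  have : shiftq q w1 c (u + v) <= q (u + v + (t1 + t2) *: w1) - (t1 + t2) * c.
    by apply: shiftq_mem; exists (t1 + t2) => //; rewrite addr_ge0.
  have : q (u + v + (t1 + t2) *: w1) <= q (u + t1 *: w1) + q (v + t2 *: w1).
    by rewrite scalerDl addrACA; exact: sq.1.
  lra.
move=> a v a0.
have [->|ap] := eqVneq a 0.
  rewrite scale0r mul0r; apply/eqP; rewrite eq_le; apply/andP; split.
    by have := shiftq_le 0; rewrite (sublin0 sq).
  by have := shiftq_ge 0; rewrite oppr0 (sublin0 sq) oppr0.
have apos : 0 < a by rewrite lt0r ap.
apply/eqP; rewrite eq_le; apply/andP; split.
  rewrite -ler_pdivrMl //; apply: le_inf_all; first exact: shiftS_ne.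
  move=> x [t t0 ->]; rewrite ler_pdivrMl //.
  apply: shiftq_mem; exists (a * t); first by rewrite mulr_ge0 // ltW.
  rewrite -scalerA -scalerDr sq.2 ?ltW //; ring.
apply: le_inf_all; first exact: shiftS_ne.
move=> y [t t0 ->]; rewrite -ler_pdivlMl //.
apply: shiftq_mem; exists (a^-1 * t); first by rewrite mulr_ge0 // invr_ge0 ltW.
have -> : a *: v + t *: w1 = a *: (v + (a^-1 * t) *: w1).
  by rewrite scalerDr scalerA mulrA mulfV // mul1r.
rewrite sq.2 ?ltW //; field.
all: exact: ap.
Qed.
End shift.

Lemma minimal_linear (q : V -> R) : sublin q -> (forall w, q (- w) <= - q w) -> linf q.
Proof.
move=> sq hodd.
have odd w : q (- w) = - q w.
  by apply/eqP; rewrite eq_le hodd /=; have := sublin_lb w sq; lra.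
have add u v : q (u + v) = q u + q v.
  apply/eqP; rewrite eq_le sq.1 /=.
  have := sq.1 (- u) (- v); rewrite -opprD !odd; lra.
move=> a u v; rewrite add; congr (_ + _).
have [a0|a0] := leP 0 a; first by rewrite sq.2.
have -> : a *: u = - ((- a) *: u) by rewrite scaleNr opprK.
by rewrite odd sq.2 ?oppr_ge0 ?ltW // mulNr opprK.
Qed.

Lemma hahn_banach (Q : V -> R) : sublin Q -> exists l, linf l /\ forall v, l v <= Q v.
Proof.
move=> sQ.
pose T := {q : V -> R | `[< sublin q /\ forall v, q v <= Q v >]}.
have QT : `[< sublin Q /\ forall v, Q v <= Q v >] by apply/asboolP; split.
pose t0 : T := exist _ Q QT.
pose Rel (a b : T) : bool := `[< forall v, sval b v <= sval a v >].
have [t tmax] : exists t, premaximal Rel t.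
  apply: (@ZL_preorder _ t0).
  - by move=> t; apply/asboolP.
  - move=> r s t /asboolP hrs /asboolP hst; apply/asboolP => v.
    exact: le_trans (hst v) (hrs v).
  move=> A Atot.
  pose S v := [set y | y = Q v \/ exists2 a : T, A a & y = sval a v].
  have Sne v : S v !=set0 by exists (Q v); left.
  have Slb v y : S v y -> - Q (- v) <= y.
    case=> [->|[a _ ->]]; first exact: sublin_lb.
    have [sa ha] := asboolW (svalP a).
    have := sublin_lb v sa; have := ha (- v); lra.
  pose g v := inf (S v).
  have gmem v y : S v y -> g v <= y by apply: inf_le_mem; exact: Slb.
  have gge v : - Q (- v) <= g v by apply: le_inf_all; [exact: Sne|exact: Slb].
  have gQ v : g v <= Q v by apply: gmem; left.
  have gsub : sublin g.
    split.
      move=> u v.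
      suff : g (u + v) - g v <= g u by lra.
      apply: le_inf_all; first exact: Sne.
      move=> x Sx.
      suff : g (u + v) - x <= g v by lra.
      apply: le_inf_all; first exact: Sne.
      move=> y Sy.
      suff [qq [Sq1 Sq2 Sq3]] : exists qq : V -> R, [/\ S (u + v) (qq (u + v)),
          sublin qq & qq u + qq v <= x + y].
        have := gmem _ _ Sq1; have := Sq2.1 u v; lra.
      case: Sx => [->|[a Aa ->]]; case: Sy => [->|[b Ab ->]].
      - by exists Q; split => //; left.
      - have [sb hb] := asboolW (svalP b).
        exists (sval b); split => //; first by right; exists b.
        by rewrite lerD2r.
      - have [sa ha] := asboolW (svalP a).
        exists (sval a); split => //; first by right; exists a.
        by rewrite lerD2l.
      - have [/asboolP hab|/asboolP hba] := Atot a b Aa Ab.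
        + have [sb hb] := asboolW (svalP b).
          exists (sval b); split => //; first by right; exists b.
          by rewrite lerD2r.
        + have [sa ha] := asboolW (svalP a).
          exists (sval a); split => //; first by right; exists a.
          by rewrite lerD2l.
    move=> a v a0.
    have [->|ap] := eqVneq a 0.
      rewrite scale0r mul0r; apply/eqP; rewrite eq_le; apply/andP; split.
        by have := gQ 0; rewrite (sublin0 sQ).
      by have := gge 0; rewrite oppr0 (sublin0 sQ) oppr0.
    have apos : 0 < a by rewrite lt0r ap.
    have Sscale w y : S w y -> S (a *: w) (a * y).
      case=> [->|[b Ab ->]]; first by left; rewrite sQ.2.
      have [sb _] := asboolW (svalP b).
      by right; exists b => //; rewrite sb.2.
    apply/eqP; rewrite eq_le; apply/andP; split.
      rewrite -ler_pdivrMl //; apply: le_inf_all; first exact: Sne.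
      by move=> x Sx; rewrite ler_pdivrMl //; apply: gmem; apply: Sscale.
    apply: le_inf_all; first exact: Sne.
    move=> y Sy; rewrite -ler_pdivlMl //.
    apply: gmem.
    case: Sy => [->|[b Ab ->]].
      by left; rewrite sQ.2 ?ltW // mulrA mulVf // mul1r.
    have [sb _] := asboolW (svalP b).
    right; exists b => //.
    by rewrite sb.2 ?ltW // mulrA mulVf // mul1r.
  have gT : `[< sublin g /\ forall v, g v <= Q v >] by apply/asboolP; split.
  exists (exist _ g gT) => s As; apply/asboolP => v /=.
  by apply: gmem; right; exists s.
have [st ht] := asboolW (svalP t).
exists (sval t); split; last by [].
apply: minimal_linear => // w.
have s1 := @shiftq_sublin (sval t) w (sval t w) st (lexx _).
have s2 := @shiftq_le (sval t) w (sval t w) st (lexx _).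
have s3 := @shiftq_w1 (sval t) w (sval t w) st (lexx _).
have sT : `[< sublin (shiftq (sval t) w (sval t w)) /\
            forall v, shiftq (sval t) w (sval t w) v <= Q v >].
  by apply/asboolP; split => // v; exact: le_trans (s2 v) (ht v).
pose s0 : T := exist _ (shiftq (sval t) w (sval t w)) sT.
have := tmax s0.
have : Rel t s0 by apply/asboolP.
move=> H /(_ H) /asboolP /= /(_ (- w)) h.
exact: le_trans h s3.
Qed.

End HBsec.

Section Sep.
Variables (R : realType) (V : lmodType R).

Lemma linf0 (l : V -> R) : linf l -> l 0 = 0.
Proof. by move=> hl; have := hl 1 0 0; rewrite scaler0 addr0 mul1r; lra. Qed.

Lemma linfN (l : V -> R) v : linf l -> l (- v) = - l v.
Proof.
move=> hl; have := hl (-1) v 0; rewrite addr0 (linf0 hl) addr0 scaleN1r => ->.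
by rewrite mulN1r.
Qed.

Lemma linfD (l : V -> R) u v : linf l -> l (u + v) = l u + l v.
Proof. by move=> hl; have := hl 1 u v; rewrite scale1r mul1r. Qed.

Lemma linfZ (l : V -> R) a u : linf l -> l (a *: u) = a * l u.
Proof. by move=> hl; have := hl a u 0; rewrite addr0 (linf0 hl) addr0. Qed.

Lemma separation (N : V -> R) (K : set V) : sublin N ->
  (forall k1 k2 (l : R), K k1 -> K k2 -> 0 <= l -> l <= 1 ->
      K (l *: k1 + (1 - l) *: k2)) ->
  (forall k, K k -> 1 <= N k) ->
  exists l, linf l /\ (forall v, l v <= N v) /\ (forall k, K k -> 1 <= l k).
Proof.
move=> sN Kconv KN.
pose S w := [set r | exists lam, exists k, [/\ 0 <= lam, lam = 0 \/ K k &
                                  r = N (w + lam *: k) - lam]].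
have Sne w : S w !=set0.
  by exists (N w); exists 0, 0; split => //; [left|rewrite scale0r addr0 subr0].
have Slb w y : S w y -> - N (- w) <= y.
  case=> lam [k [l0 hk ->]].
  have h1 := sN.1 (w + lam *: k) (- w).
  rewrite addrC addKr in h1.
  have h2 : lam <= N (lam *: k).
    rewrite sN.2 //; case: hk => [->|Kk]; first by rewrite mul0r.
    by rewrite -{1}[lam]mulr1 ler_wpM2l // KN.
  lra.
pose Q w := inf (S w).
have Qmem w y : S w y -> Q w <= y by apply: inf_le_mem; exact: Slb.
have Qge w : - N (- w) <= Q w by apply: le_inf_all; [exact: Sne|exact: Slb].
have QN w : Q w <= N w.
  by apply: Qmem; exists 0, 0; split => //; [left|rewrite scale0r addr0 subr0].
have Sscale b w y : 0 < b -> S w y -> S (b *: w) (b * y).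
  move=> b0 [lam [k [l0 hk ->]]]; exists (b * lam), k; split.
  - by rewrite mulr_ge0 // ltW.
  - by case: hk => [->|]; [left; rewrite mulr0|right].
  - by rewrite -scalerA -scalerDr sN.2 ?ltW // mulrBr.
have sQ : sublin Q.
  split.
    move=> u v.
    suff : Q (u + v) - Q v <= Q u by lra.
    apply: le_inf_all; first exact: Sne.
    move=> x [l1 [k1 [l10 hk1 ->]]].
    suff : Q (u + v) - (N (u + l1 *: k1) - l1) <= Q v by lra.
    apply: le_inf_all; first exact: Sne.
    move=> y [l2 [k2 [l20 hk2 ->]]].
    have [e1|n1] := eqVneq l1 0.
      rewrite e1 scale0r addr0 subr0.
      have : Q (u + v) <= N (u + v + l2 *: k2) - l2.
        by apply: Qmem; exists l2, k2; split.
      have := sN.1 u (v + l2 *: k2); rewrite addrA; lra.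
    have [e2|n2] := eqVneq l2 0.
      rewrite e2 scale0r addr0 subr0.
      have : Q (u + v) <= N (u + v + l1 *: k1) - l1.
        by apply: Qmem; exists l1, k1; split.
      have := sN.1 (u + l1 *: k1) v; rewrite addrAC; lra.
    have Kk1 : K k1 by case: hk1 => // /eqP; rewrite (negbTE n1).
    have Kk2 : K k2 by case: hk2 => // /eqP; rewrite (negbTE n2).
    have l1p : 0 < l1 by rewrite lt0r n1.
    have l2p : 0 < l2 by rewrite lt0r n2.
    have lp : 0 < l1 + l2 by rewrite addr_gt0.
    have lne : l1 + l2 != 0 by rewrite gt_eqF.
    pose k := (l1 / (l1 + l2)) *: k1 + (1 - l1 / (l1 + l2)) *: k2.
    have Kk : K k.
      apply: Kconv => //; first by rewrite divr_ge0 // ltW.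
      by rewrite ler_pdivrMr // mul1r lerDl ltW.
    have ek : (l1 + l2) *: k = l1 *: k1 + l2 *: k2.
      rewrite /k scalerDr !scalerA; congr (_ *: _ + _ *: _).
        by rewrite mulrC mulfVK.
      by rewrite mulrBr mulr1 mulrCA mulfV // mulr1; lra.
    have : Q (u + v) <= N (u + v + (l1 + l2) *: k) - (l1 + l2).
      by apply: Qmem; exists (l1 + l2), k; split => //; [rewrite ltW|right].
    rewrite ek addrACA.
    have := sN.1 (u + l1 *: k1) (v + l2 *: k2); lra.
  move=> a v a0.
  have [->|ap] := eqVneq a 0.
    rewrite scale0r mul0r; apply/eqP; rewrite eq_le; apply/andP; split.
      by have := QN 0; rewrite (sublin0 sN).
    by have := Qge 0; rewrite oppr0 (sublin0 sN) oppr0.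
  have apos : 0 < a by rewrite lt0r ap.
  apply/eqP; rewrite eq_le; apply/andP; split.
    rewrite -ler_pdivrMl //; apply: le_inf_all; first exact: Sne.
    by move=> x Sx; rewrite ler_pdivrMl //; apply: Qmem; apply: Sscale.
  apply: le_inf_all; first exact: Sne.
  move=> y Sy; rewrite -ler_pdivlMl //; apply: Qmem.
  have ai : 0 < a^-1 by rewrite invr_gt0.
  have := Sscale a^-1 _ _ ai Sy.
  by rewrite scalerA mulVf // scale1r.
have [l [hl lQ]] := hahn_banach sQ.
exists l; split => //; split; first by move=> v; exact: le_trans (lQ v) (QN v).
move=> k Kk.
have : Q (- k) <= - 1.
  have -> : -1 = N (- k + 1 *: k) - 1 by rewrite scale1r addNr (sublin0 sN) sub0r.
  by apply: Qmem; exists 1, k; split => //; right.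
have := lQ (- k); rewrite linfN //; lra.
Qed.

End Sep.

Section Dual.
Variables (R : realType) (X : normedModType R).

Lemma dual_linf (f : X -> R) : dual_elt f -> linf f.
Proof. by case. Qed.

Lemma dual_bound (f : X -> R) : dual_elt f ->
  exists2 C, 0 < C & forall v, `|f v| <= C * `|v|.
Proof.
move=> [lf cf].
have f0 : f 0 = 0 := linf0 lf.
have := cf 0; move/cvgrPdist_lt => /(_ 1 ltr01).
rewrite f0 => /nbhs_norm0P [e /= e0 he].
exists (2 / e); first by rewrite divr_gt0.
move=> v; have [->|v0] := eqVneq v 0; first by rewrite f0 !normr0 mulr0.
have nv : 0 < `|v| by rewrite normr_gt0.
pose s := e / (2 * `|v|).
have s0 : 0 < s by rewrite divr_gt0 // mulr_gt0.
have := he (s *: v).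
rewrite /= normrZ gtr0_norm // sub0r normrN linfZ // normrM gtr0_norm //.
have hs : s * `|v| < e.
  have -> : s * `|v| = e / 2 by rewrite /s; field; rewrite gt_eqF.
  lra.
move=> /(_ hs) h.
have : `|f v| <= s^-1 by rewrite -(ler_pM2l s0) mulfV ?gt_eqF // ltW.
have -> : s^-1 = 2 / e * `|v|.
  by rewrite /s; field; rewrite !gt_eqF.
done.
Qed.

Lemma dual_of_bound (f : X -> R) C : linf f -> 0 < C ->
  (forall v, `|f v| <= C * `|v|) -> dual_elt f.
Proof.
move=> lf C0 hb; split => // x.
apply/cvgrPdist_lt => eps eps0.
have ec : 0 < eps / C by rewrite divr_gt0.
near=> z.
have -> : f x - f z = f (x - z) by rewrite linfD // (linfN z lf).
apply: le_lt_trans (hb _) _.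
rewrite -ltr_pdivlMl // mulrC.
near: z.
exact: (@cvgr_dist_lt _ _ _ (nbhs x) _ id x (@cvg_id _ (nbhs x)) _ ec).
Unshelve. all: by end_near. Qed.

Lemma dual_comb (f g : X -> R) (a b : R) : dual_elt f -> dual_elt g ->
  dual_elt (fun y => a * f y + b * g y).
Proof.
move=> df dg; have [C1 C10 h1] := dual_bound df; have [C2 C20 h2] := dual_bound dg.
apply: (@dual_of_bound _ (`|a| * C1 + `|b| * C2 + 1)).
- move=> c u v /=; rewrite (dual_linf df c u v) (dual_linf dg c u v); ring.
- by apply: ltr_wpDl; [rewrite addr_ge0 // mulr_ge0 // ltW | exact: ltr01].
move=> v; apply: le_trans (ler_normD _ _) _.
rewrite !normrM.
have e1 := ler_wpM2l (normr_ge0 a) (h1 v).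
have e2 := ler_wpM2l (normr_ge0 b) (h2 v).
have -> : (`|a| * C1 + `|b| * C2 + 1) * `|v| = `|a| * (C1 * `|v|) + `|b| * (C2 * `|v|) + `|v|.
  by ring.
apply: le_trans (lerD e1 e2) _.
by rewrite lerDl.
Qed.

Lemma dual_dsub (f g : X -> R) : dual_elt f -> dual_elt g -> dual_elt (dsub f g).
Proof.
move=> df dg; have := dual_comb 1 (-1) df dg.
by have -> : dsub f g = (fun y => 1 * f y + (-1) * g y) by apply/funext => y /=; rewrite /dsub; ring.
Qed.

Lemma dual_zero : dual_elt (fun _ : X => (0 : R)).
Proof.
apply: (@dual_of_bound _ 1) => //; first by move=> a u v; rewrite mulr0 addr0.
by move=> v; rewrite normr0 mul1r.
Qed.

Lemma dual_norm_le (f : X -> R) C : (forall v, `|v| <= 1 -> `|f v| <= C) -> dual_norm f <= C.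
Proof.
move=> h; apply: ge_sup; first by exists `|f 0|, 0 => //=; rewrite normr0.
by move=> _ [v /= v1 <-]; exact: h.
Qed.

Lemma dual_norm_ub (f : X -> R) v : dual_elt f -> `|f v| <= dual_norm f * `|v|.
Proof.
move=> df; have [C C0 hC] := dual_bound df.
have ub : forall w, `|w| <= 1 -> `|f w| <= dual_norm f.
  move=> w w1; apply: ub_le_sup; last by exists w.
  exists C => _ [u /= u1 <-]; apply: le_trans (hC u) _.
  by rewrite -[leRHS]mulr1 ler_wpM2l // ltW.
have [->|v0] := eqVneq v 0.
  by rewrite (linf0 (dual_linf df)) !normr0 mulr0.
have nv : 0 < `|v| by rewrite normr_gt0.
have := ub (`|v|^-1 *: v).
rewrite normrZ gtr0_norm ?invr_gt0 // mulVf ?gt_eqF // lexx (linfZ _ _ (dual_linf df)).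
rewrite normrM gtr0_norm ?invr_gt0 // => /(_ isT).
by rewrite ler_pdivrMl // mulrC.
Qed.

Lemma dual_norm_ge0 (f : X -> R) : dual_elt f -> 0 <= dual_norm f.
Proof.
move=> df; have [C C0 hC] := dual_bound df.
apply: le_trans (normr_ge0 (f 0)) _.
apply: ub_le_sup; last by exists 0 => //=; rewrite normr0.
exists C => _ [u /= u1 <-]; apply: le_trans (hC u) _.
by rewrite -[leRHS]mulr1 ler_wpM2l // ltW.
Qed.

Lemma norming (y : X) : exists l, [/\ dual_elt l, l y = `|y| & forall v, `|l v| <= `|v|].
Proof.
have [->|y0] := eqVneq y 0.
  by exists (fun _ => 0); split; [exact: dual_zero|rewrite normr0|move=> v; rewrite normr0].
have ny : 0 < `|y| by rewrite normr_gt0.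
have sN : sublin (fun v : X => `|v|).
  split; first by move=> u v; exact: ler_normD.
  by move=> a v a0; rewrite normrZ ger0_norm.
pose k := `|y|^-1 *: y.
have Kc : forall k1 k2 (l : R), [set k] k1 -> [set k] k2 -> 0 <= l -> l <= 1 ->
    [set k] (l *: k1 + (1 - l) *: k2).
  by move=> k1 k2 l /= -> -> _ _; rewrite -scalerDl subrKC scale1r.
have KN : forall k0, [set k] k0 -> 1 <= `|k0|.
  by move=> k0 /= ->; rewrite /k normrZ gtr0_norm ?invr_gt0 // mulVf ?gt_eqF.
have [l [hl [lN lK]]] := @separation R X (fun v => `|v|) [set k] sN Kc KN.
have lb v : `|l v| <= `|v|.
  rewrite ler_norml lN andbT lerNl -(linfN v hl); apply: le_trans (lN _) _.
  by rewrite normrN.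
exists l; split => //.
  by apply: (@dual_of_bound _ 1) => // v; rewrite mul1r.
apply/eqP; rewrite eq_le; apply/andP; split; first by have := lb y; rewrite ler_norml => /andP[].
have := lK k erefl; rewrite /k (linfZ _ _ hl) -ler_pdivrMl ?invr_gt0 //.
by rewrite invrK mulr1.
Qed.

End Dual.
Import Num.Def.

Section Mono.
Variables (R : realType) (X : normedModType R).

Lemma bounded_of (A : set X) (M : R) : (forall x, A x -> `|x| <= M) -> bounded_set A.
Proof.
move=> hM; rewrite /= /bounded_near; exists M; split; first exact: num_real.
by move=> N MN x Ax /=; apply: le_trans (hM x Ax) (ltW MN).
Qed.

Lemma bounded_get (A : set X) : bounded_set A -> exists M : R, 0 <= M /\ forall x, A x -> `|x| <= M.
Proof.
rewrite /= /bounded_near => -[M0 [_ HM]].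
exists (maxr (M0 + 1) 0); split; first by rewrite le_max lexx orbT.
move=> x Ax; have := HM (maxr (M0 + 1) 0).
rewrite lt_max ltrDl ltr01 => /(_ isT x Ax) //.
Qed.

Lemma dual_sub (f : X -> R) u v : dual_elt f -> f (u - v) = f u - f v.
Proof. by move=> df; rewrite (linfD _ _ (dual_linf df)) (linfN _ (dual_linf df)). Qed.

Lemma dual_combE (f : X -> R) a b u v : dual_elt f -> f (a *: u + b *: v) = a * f u + b * f v.
Proof. by move=> df; rewrite (dual_linf df) (linfZ _ _ (dual_linf df)). Qed.

Lemma core (T : set (X * (X -> R))) (M : R) (y : X) (ys : X -> R) (C : R) :
  maximal_monotone T -> 0 <= M -> (forall a, domain T a -> `|a| <= M) ->
  dual_elt ys -> (forall a as_, T (a, as_) -> as_ y + ys a - as_ a <= C) -> `|y| <= M.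
Proof.
move=> [opT [monT maxT]] M0 hD dys hC.
rewrite leNgt; apply/negP => yM.
have [l [dl ly lb]] := norming y.
have yMp : 0 < `|y| - M by rewrite subr_gt0.
pose mu := maxr 0 ((C - ys y) / (`|y| - M)).
have mu0 : 0 <= mu by rewrite le_max lexx.
have muge : C - ys y <= mu * (`|y| - M).
  by rewrite -ler_pdivrMr // le_max lexx orbT.
pose g := fun v => 1 * ys v + mu * l v.
have dg : dual_elt g by apply: dual_comb.
have key : forall a as_, T (a, as_) -> 0 <= g (y - a) - as_ (y - a).
  move=> a as_ Ta.
  have das : dual_elt as_ := opT _ Ta.
  rewrite (dual_sub _ _ dg) (dual_sub _ _ das) /g ly.
  have la : l a <= M.
    apply: le_trans (le_trans (ler_norm _) (lb a)) (hD a _); by exists as_.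
  have := hC a as_ Ta.
  have : mu * l a <= mu * M by rewrite ler_wpM2l.
  lra.
pose S := T `|` [set (y, g)].
have opS : operator S.
  by move=> z [/opT //|-> /=].
have monS : Defs.monotone S.
  move=> x1 xs1 x2 xs2 [T1|[-> ->]] [T2|[-> ->]].
  - exact: monT.
  - have := key _ _ T1.
    have d1 : dual_elt xs1 := opT _ T1.
    rewrite !(dual_sub _ _ dg) !(dual_sub _ _ d1); lra.
  - exact: key.
  - by rewrite subrr.
have := maxT S opS monS (fun z Tz => or_introl Tz).
move=> SE.
have : T (y, g) by rewrite -SE; right.
move=> Tyg; have := hD y (ex_intro _ g Tyg); lra.
Qed.

Lemma affine_lim (F0 s : R) : (forall lam, 0 < lam -> lam < 1 -> F0 + lam * s <= 0) -> F0 <= 0.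
Proof.
move=> H; have [s0|s0] := leP 0 s.
  have := H (1/2); have : 0 <= 1/2 * s by rewrite mulr_ge0.
  move=> h1 /(_ _ _)/= h2; have := h2 (_ : 0 < 1/2) (_ : 1/2 < 1).
  move=> /(_ _ _) h3; lra.
rewrite leNgt; apply/negP => F0p.
have dp : 0 < F0 - 2 * s by lra.
have := H (F0 / (F0 - 2 * s)).
have l0 : 0 < F0 / (F0 - 2 * s) by rewrite divr_gt0.
have l1 : F0 / (F0 - 2 * s) < 1 by rewrite ltr_pdivrMr // mul1r; lra.
move=> /(_ l0 l1).
have -> : F0 + F0 / (F0 - 2 * s) * s = F0 * (F0 - s) / (F0 - 2 * s).
  by field; rewrite gt_eqF.
have : 0 < F0 * (F0 - s) / (F0 - 2 * s) by rewrite divr_gt0 // mulr_gt0 //; lra.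
lra.
Qed.

Lemma fitz_bound (T : set (X * (X -> R))) h x xs0 (r : R) :
  fitz_family T h -> dual_elt xs0 -> (h x xs0 <= r%:E)%E ->
  forall a as_, T (a, as_) -> operator T -> as_ x + xs0 a - as_ a <= r.
Proof.
move=> [cvx [_ [hge heq]]] d0 hr a as_ Ta opT.
have das : dual_elt as_ := opT _ Ta.
pose P := xs0 x; pose A := as_ a; pose S := as_ x + xs0 a.
suff : S - A - r <= 0 by rewrite /S /A; lra.
apply: (@affine_lim _ (P - S + A)) => lam l0 l1.
have hl : 0 <= lam <= 1 by rewrite ltW // ltW.
have ha : (h a as_ <= (as_ a)%:E)%E by rewrite heq.
have := cvx x xs0 a as_ r (as_ a) lam d0 das hr ha hl.
have dc : dual_elt (fun y => lam * xs0 y + (1 - lam) * as_ y) by apply: dual_comb.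
move/(le_trans (hge _ _ dc)); rewrite lee_fin.
rewrite (dual_combE _ _ _ _ d0) (dual_combE _ _ _ _ das) => Hc.
have E : lam * (S - A - r + lam * (P - S + A)) =
  lam * (lam * xs0 x + (1 - lam) * xs0 a) + (1 - lam) * (lam * as_ x + (1 - lam) * as_ a)
  - (lam * r + (1 - lam) * as_ a) by rewrite /S /A /P; ring.
have : lam * (S - A - r + lam * (P - S + A)) <= 0 by rewrite E; lra.
by rewrite pmulr_rle0.
Qed.

End Mono.

Section Fitz.
Variables (R : realType) (X : normedModType R) (T : set (X * (X -> R))).

Definition phiT (x : X) (xs : X -> R) : \bar R :=
  ereal_sup [set ((z.2 x + xs z.1 - z.2 z.1)%:E) | z in T].

Lemma phi_ub x xs a as_ : T (a, as_) -> ((as_ x + xs a - as_ a)%:E <= phiT x xs)%E.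
Proof. by move=> Ta; apply: ereal_sup_ubound; exists (a, as_). Qed.

Lemma phi_le x xs e : (forall a as_, T (a, as_) -> ((as_ x + xs a - as_ a)%:E <= e)%E) ->
  (phiT x xs <= e)%E.
Proof. by move=> H; apply: ge_ereal_sup => _ [[a as_] Ta <-]; exact: H. Qed.

Lemma phi_gt x xs (t : R) : (t%:E < phiT x xs)%E ->
  exists a as_, T (a, as_) /\ t < as_ x + xs a - as_ a.
Proof.
by move=> /ereal_sup_gt [_ [[a as_] Ta <-]]; rewrite lte_fin => h; exists a, as_.
Qed.

Hypothesis mT : maximal_monotone T.

Lemma phi_fitz : fitz_family T phiT.
Proof.
have [opT [monT maxT]] := mT.
split.
  move=> x1 xs1 x2 xs2 t1 t2 l d1 d2 h1 h2 /andP[l0 l1].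
  apply: phi_le => a as_ Ta; have das : dual_elt as_ := opT _ Ta.
  have e1 := le_trans (phi_ub x1 xs1 Ta) h1.
  have e2 := le_trans (phi_ub x2 xs2 Ta) h2.
  rewrite lee_fin in e1; rewrite lee_fin in e2; rewrite lee_fin /=.
  rewrite (dual_combE _ _ _ _ das).
  have : l * (as_ x1 + xs1 a - as_ a) <= l * t1 by rewrite ler_wpM2l.
  have : (1 - l) * (as_ x2 + xs2 a - as_ a) <= (1 - l) * t2 by rewrite ler_wpM2l // subr_ge0.
  have E : as_ (l *: x1) + as_ ((1 - l) *: x2) = l * as_ x1 + (1 - l) * as_ x2.
    by rewrite !(linfZ _ _ (dual_linf das)).
  lra.
split.
  move=> x0 xs0 t d0 /phi_gt [a [as_ [Ta ht]]].
  have das : dual_elt as_ := opT _ Ta.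
  have [C C0 hC] := dual_bound das.
  pose g := as_ x0 + xs0 a - as_ a - t.
  have g0 : 0 < g by rewrite /g; lra.
  pose K := C + `|a| + 1.
  have K0 : 0 < K by rewrite /K; have := normr_ge0 a; lra.
  pose eps := g / (2 * K).
  have eps0 : 0 < eps by rewrite divr_gt0 // mulr_gt0.
  exists eps; split => // x xs dxs hx hxs.
  apply: lt_le_trans (phi_ub x xs Ta); rewrite lte_fin.
  have b1 : `|as_ (x - x0)| <= C * eps.
    by apply: le_trans (hC _) _; rewrite ler_wpM2l ?ltW.
  have b2 : `|dsub xs xs0 a| <= eps * `|a|.
    apply: le_trans (dual_norm_ub _ (dual_dsub dxs d0)) _.
    by rewrite ler_wpM2r // ltW.
  have E1 : eps * K = g / 2 by rewrite /eps; field; rewrite gt_eqF.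
  have E2 : eps * K = C * eps + eps * `|a| + eps by rewrite /K; ring.
  rewrite (dual_sub _ _ das) in b1.
  rewrite /dsub in b2.
  move: b1 b2; rewrite !ler_norml => /andP[b1 b1'] /andP[b2 b2'].
  rewrite /g in E1; lra.
split.
  move=> x xs dxs; rewrite leNgt; apply/negP => hlt.
  have key : forall a as_, T (a, as_) -> 0 < xs (x - a) - as_ (x - a).
    move=> a as_ Ta; have das : dual_elt as_ := opT _ Ta.
    have := le_lt_trans (phi_ub x xs Ta) hlt; rewrite lte_fin.
    rewrite (dual_sub _ _ dxs) (dual_sub _ _ das); lra.
  pose S := T `|` [set (x, xs)].
  have opS : operator S by move=> z [/opT //|-> /=].
  have monS : Defs.monotone S.
    move=> x1 xs1 x2 xs2 [T1|[-> ->]] [T2|[-> ->]].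
    - exact: monT.
    - have := key _ _ T1; have d1 : dual_elt xs1 := opT _ T1.
      rewrite !(dual_sub _ _ dxs) !(dual_sub _ _ d1); lra.
    - exact/ltW/key.
    - by rewrite subrr.
  have SE := maxT S opS monS (fun z Tz => or_introl Tz).
  have Tx : T (x, xs) by rewrite -SE; right.
  have := key _ _ Tx; rewrite subrr; lra.
move=> a as_ Ta; apply/eqP; rewrite eq_le; apply/andP; split.
  apply: phi_le => b bs Tb; rewrite lee_fin.
  have := monT _ _ _ _ Ta Tb; have da : dual_elt as_ := opT _ Ta; have db : dual_elt bs := opT _ Tb.
  rewrite (dual_sub _ _ da) (dual_sub _ _ db); lra.
by apply: le_trans (phi_ub a as_ Ta); rewrite lee_fin addrK.
Qed.

Lemma phi_weak : lsc_strong_weakstar phiT.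
Proof.
have [opT _] := mT.
move=> x0 xs0 t d0 /phi_gt [a [as_ [Ta ht]]].
have das : dual_elt as_ := opT _ Ta.
have [C C0 hC] := dual_bound das.
pose g := as_ x0 + xs0 a - as_ a - t.
have g0 : 0 < g by rewrite /g; lra.
pose K := C + 1.
have K0 : 0 < K by rewrite /K; lra.
pose eps := g / (2 * K).
have eps0 : 0 < eps by rewrite divr_gt0 // mulr_gt0.
exists eps, [:: a]; split => // x xs dxs hx hxs.
apply: lt_le_trans (phi_ub x xs Ta); rewrite lte_fin.
have b1 : `|as_ (x - x0)| <= C * eps.
  by apply: le_trans (hC _) _; rewrite ler_wpM2l ?ltW.
have b2 := hxs a (mem_head _ _).
have E1 : eps * K = g / 2 by rewrite /eps; field; rewrite gt_eqF.
have E2 : eps * K = C * eps + eps by rewrite /K; ring.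
rewrite (dual_sub _ _ das) in b1.
move: b1 b2; rewrite ler_norml ltr_norml => /andP[b1 b1'] /andP[b2 b2'].
rewrite /g in E1; lra.
Qed.

End Fitz.

Section SepW.
Variables (R : realType) (X : normedModType R).

Definition W := (X * (X -> R) * R)%type.

Lemma max0D (a b : R) : maxr (a + b) 0 <= maxr a 0 + maxr b 0.
Proof.
have h1 : a <= maxr a 0 by rewrite le_max lexx.
have h2 : 0 <= maxr a 0 by rewrite le_max lexx orbT.
have h3 : b <= maxr b 0 by rewrite le_max lexx.
have h4 : 0 <= maxr b 0 by rewrite le_max lexx orbT.
rewrite ge_max; apply/andP; split; lra.
Qed.

Lemma max0M (a s : R) : 0 <= a -> maxr (a * s) 0 = a * maxr s 0.
Proof.
by move=> a0; rewrite maxr_pMr // mulr0.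
Qed.

Lemma sum_ge_mem (s : seq X) (F : X -> R) y : (forall v, 0 <= F v) -> y \in s ->
  F y <= \sum_(v <- s) F v.
Proof.
move=> F0; elim: s => // a s IH; rewrite in_cons big_cons => /orP[/eqP ->|ys].
  by rewrite lerDl sumr_ge0.
by apply: le_trans (IH ys) _; rewrite lerDr.
Qed.

Lemma sum_zero (s : seq X) (F : X -> R) : (forall v, v \in s -> F v = 0) ->
  \sum_(v <- s) F v = 0.
Proof.
elim: s => [|a s IH] H; first by rewrite big_nil.
rewrite big_cons H ?mem_head // add0r IH // => v vs; apply: H.
by rewrite in_cons vs orbT.
Qed.

Definition deltaf (y : X) : X -> R := fun v => if v == y then 1 else 0.

Lemma finrep (L : (X -> R) -> R) (s : seq X) : linf L ->
  (forall g, (forall y, y \in s -> g y = 0) -> L g = 0) ->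
  exists y0, forall g, dual_elt g -> L g = g y0.
Proof.
elim: s L => [|y s IH] L lL H.
  exists 0 => g dg; rewrite (linf0 (dual_linf dg)); exact: H.
pose L' g := L g - g y * L (deltaf y).
have lL' : linf L'.
  move=> a g1 g2; rewrite /L' (lL a g1 g2).
  have -> : (a *: g1 + g2) y = a * g1 y + g2 y by [].
  ring.
have HL' : forall g, (forall v, v \in s -> g v = 0) -> L' g = 0.
  move=> g hg; rewrite /L'.
  have E : L (g - g y *: deltaf y) = L g - g y * L (deltaf y).
    by rewrite (linfD _ _ lL) (linfN _ lL) (linfZ _ _ lL).
  rewrite -E; apply: H => v.
  have -> : (g - g y *: deltaf y) v = g v - g y * deltaf y v by [].
  rewrite in_cons => /orP[/eqP ->|vs].
    by rewrite /deltaf eqxx mulr1 subrr.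
  have gv := hg v vs; rewrite gv /deltaf.
  case: ifP => [/eqP E'|_]; first by rewrite -E' gv mulr1 subrr.
  by rewrite mulr0 subrr.
have [y0 hy0] := IH L' lL' HL'.
exists (y0 + L (deltaf y) *: y) => g dg.
rewrite (linfD _ _ (dual_linf dg)) (linfZ _ _ (dual_linf dg)) -hy0 // /L'; ring.
Qed.

Variables (eps del : R) (ys : seq X).
Hypotheses (eps0 : 0 < eps) (del0 : 0 < del).

Definition NW (w : W) : R :=
  (`|w.1.1| + \sum_(y <- ys) `|w.1.2 y|) / eps + maxr w.2 0 / del.

Lemma NW_sublin : sublin NW.
Proof.
split.
  move=> [[a g] s] [[b k] r]; rewrite /NW /=.
  have h1 : `|a + b| <= `|a| + `|b| := ler_normD _ _.
  have h2 : \sum_(y <- ys) `|(g + k) y| <= \sum_(y <- ys) `|g y| + \sum_(y <- ys) `|k y|.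
    by rewrite -big_split /=; apply: ler_sum => i _; exact: ler_normD.
  have h3 := max0D s r.
  have e1 : (`|a + b| + \sum_(y <- ys) `|(g + k) y|) / eps <=
      (`|a| + \sum_(y <- ys) `|g y|) / eps + (`|b| + \sum_(y <- ys) `|k y|) / eps.
    rewrite -mulrDl; apply: ler_wpM2r; [by rewrite invr_ge0 ltW|lra].
  have e2 : maxr (s + r) 0 / del <= maxr s 0 / del + maxr r 0 / del.
    by rewrite -mulrDl; apply: ler_wpM2r; [rewrite invr_ge0 ltW|].
  lra.
move=> c [[a g] s] c0; rewrite /NW /=.
rewrite normrZ ger0_norm // max0M //.
have -> : \sum_(y <- ys) `|c * g y| = c * \sum_(y <- ys) `|g y|.
  by rewrite mulr_sumr; apply: eq_bigr => i _; rewrite normrM ger0_norm.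
rewrite -mulrDr; ring.
Qed.

End SepW.

Section SepMain.
Variables (R : realType) (X : normedModType R).

Lemma Weq (w1 w2 : W X) : w1.1.1 = w2.1.1 -> w1.1.2 = w2.1.2 -> w1.2 = w2.2 -> w1 = w2.
Proof. by case: w1 => [[? ?] ?]; case: w2 => [[? ?] ?] /= -> -> ->. Qed.

Lemma sep_main (h : X -> (X -> R) -> \bar R) x z (t : R) :
  convex_fn h -> lsc_strong_weakstar h -> dual_elt z -> (t%:E < h x z)%E ->
  exists l1 y0 (al : R), [/\ dual_elt l1, 0 <= al &
    forall u us r, dual_elt us -> (h u us <= r%:E)%E ->
      1 <= l1 (u - x) + (us y0 - z y0) + al * (r - t)].
Proof.
move=> cvx lsc dz ht.
have [t' [tt' ht']] : exists t', t < t' /\ (t'%:E < h x z)%E.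
  move: ht; case: (h x z) => [r| |] //.
    rewrite lte_fin => tr; exists ((t + r) / 2); rewrite lte_fin; split; lra.
  by move=> _; exists (t + 1); split; [lra|exact: ltry].
have [eps [ys [eps0 hl]]] := lsc x z t' dz ht'.
pose del := t' - t.
have del0 : 0 < del by rewrite /del; lra.
pose K : set (W X) := [set w | exists u us r, [/\ dual_elt us, (h u us <= r%:E)%E &
   w = ((u - x, us - z), r - t)]].
have Kc : forall k1 k2 (l : R), K k1 -> K k2 -> 0 <= l -> l <= 1 ->
    K (l *: k1 + (1 - l) *: k2).
  move=> k1 k2 l [u1 [us1 [r1 [d1 h1 ->]]]] [u2 [us2 [r2 [d2 h2 ->]]]] l0 l1.
  exists (l *: u1 + (1 - l) *: u2), (fun v => l * us1 v + (1 - l) * us2 v),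
    (l * r1 + (1 - l) * r2); split.
  - exact: dual_comb.
  - by apply: cvx => //; rewrite l0 l1.
  - apply: Weq => /=.
    + by rewrite !scalerBr addrACA -opprD -scalerDl subrKC scale1r.
    + apply/funext => v.
      have -> : (l *: (us1 - z) + (1 - l) *: (us2 - z)) v =
        l * (us1 v - z v) + (1 - l) * (us2 v - z v) by [].
      have -> : ((fun v => l * us1 v + (1 - l) * us2 v) - z) v =
        l * us1 v + (1 - l) * us2 v - z v by [].
      ring.
    + by change (l * (r1 - t) + (1 - l) * (r2 - t) = l * r1 + (1 - l) * r2 - t); ring.
have KN : forall k, K k -> 1 <= NW eps del ys k.
  move=> k [u [us [r [du hr ->]]]]; rewrite /NW /=.
  have s0 : 0 <= \sum_(y <- ys) `|(us - z) y| by apply: sumr_ge0.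
  have mm : 0 <= maxr (r - t) 0 by rewrite le_max lexx orbT.
  have m0 : 0 <= maxr (r - t) 0 / del by rewrite divr_ge0 // ltW.
  have [hu|hu] := leP eps `|u - x|.
    have : 1 <= (`|u - x| + \sum_(y <- ys) `|(us - z) y|) / eps.
      by rewrite ler_pdivlMr // mul1r; lra.
    lra.
  have [/hasP [y yin hy]|hn] := boolP (has (fun y => eps <= `|us y - z y|) ys).
    have := @sum_ge_mem R X ys (fun v => `|(us - z) v|) y (fun v => normr_ge0 _) yin.
    move=> /= hs.
    have : 1 <= (`|u - x| + \sum_(y <- ys) `|(us - z) y|) / eps.
      rewrite ler_pdivlMr // mul1r.
      have : eps <= `|(us - z) y| by [].
      have := normr_ge0 (u - x); lra.
    lra.
  have hys : forall y, y \in ys -> `|us y - z y| < eps.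
    move=> y yin; move/hasPn : hn => /(_ y yin) /=; by rewrite -ltNge.
  have := hl u us du hu hys => ht2.
  have : (t'%:E < r%:E)%E := lt_le_trans ht2 hr.
  rewrite lte_fin => t'r.
  have : 1 <= maxr (r - t) 0 / del.
    rewrite ler_pdivlMr // mul1r le_max; apply/orP; left; rewrite /del; lra.
  have : 0 <= (`|u - x| + \sum_(y <- ys) `|(us - z) y|) / eps.
    by apply: divr_ge0; [apply: addr_ge0|apply: ltW].
  lra.
have [l [hl' [lN lK]]] := @separation R (W X) _ K (@NW_sublin R X eps del ys eps0 del0) Kc KN.
pose l1 := fun a : X => l ((a, (0 : X -> R)), (0 : R)).
pose l2 := fun g : X -> R => l ((0 : X, g), (0 : R)).
pose al := l ((0 : X, (0 : X -> R)), (1 : R)).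
have lin1 : linf l1.
  move=> c a b; rewrite /l1 -hl'; congr l; apply: Weq => /=; rewrite // ?scaler0 ?mulr0 ?addr0 //.
have lin2 : linf l2.
  move=> c a b; rewrite /l2 -hl'; congr l; apply: Weq => /=; rewrite // ?scaler0 ?mulr0 ?addr0 //.
have N1 a : NW eps del ys ((a, (0 : X -> R)), (0 : R)) = `|a| / eps.
  rewrite /NW /= sum_zero; last by move=> v _; rewrite normr0.
  by rewrite addr0 maxxx mul0r addr0.
have b1 a : `|l1 a| <= eps^-1 * `|a|.
  rewrite ler_norml; apply/andP; split.
    rewrite lerNl -(linfN _ lin1); apply: le_trans (lN _) _.
    by rewrite N1 normrN mulrC.
  by apply: le_trans (lN _) _; rewrite N1 mulrC.
have dl1 : dual_elt l1 by apply: (@dual_of_bound _ _ _ (eps^-1)); rewrite ?invr_gt0.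
have al0 : 0 <= al.
  have := lN ((0 : X, (0 : X -> R)), (-1 : R)).
  have -> : l ((0 : X, (0 : X -> R)), (-1 : R)) = - al.
    rewrite -(linfN _ hl'); congr l; apply: Weq => /=; by rewrite ?oppr0.
  rewrite /NW /= sum_zero; last by move=> v _; rewrite normr0.
  have -> : maxr (-1 : R) 0 = 0 by apply/max_idPr; rewrite lerN10.
  rewrite normr0 addr0 !mul0r addr0; lra.
have l2van g : (forall y, y \in ys -> g y = 0) -> l2 g = 0.
  move=> hg.
  have N2 g' : (forall y, y \in ys -> g' y = 0) -> l2 g' <= 0.
    move=> hg'; apply: le_trans (lN _) _; rewrite /NW /= sum_zero.
      by rewrite normr0 addr0 maxxx !mul0r addr0.
    by move=> v vs; rewrite hg' // normr0.
  have h1 := N2 g hg.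
  have h2 : l2 (- g) <= 0.
    by apply: N2 => v vs; have -> : (- g) v = - g v by []; rewrite hg // oppr0.
  rewrite (linfN _ lin2) in h2; lra.
have [y0 hy0] := finrep lin2 l2van.
exists l1, y0, al; split => // u us r dus hr.
have := lK _ (ex_intro _ u (ex_intro _ us (ex_intro _ r (And3 dus hr erefl)))).
have -> : ((u - x, us - z), r - t) = ((u - x, (0 : X -> R)), (0 : R)) +
    ((0 : X, us - z), (0 : R)) + (r - t) *: ((0 : X, (0 : X -> R)), (1 : R)) :> W X.
  apply: Weq => /=; rewrite ?scaler0 ?addr0 ?add0r //; exact: (esym (mulr1 _)).
rewrite !(linfD _ _ hl') (linfZ _ _ hl') -/(l1 _) -/(l2 _) -/al.
rewrite hy0; last exact: (dual_dsub dus dz).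
have -> : (us - z) y0 = us y0 - z y0 by [].
by rewrite mulrC.
Qed.

End SepMain.

Section Minor.
Variables (R : realType) (X : normedModType R).

Definition minor (h : X -> (X -> R) -> \bar R) (ys : X -> R) (y : X) (c : R) :=
  dual_elt ys /\ forall u us, dual_elt us -> ((ys u + us y - c)%:E <= h u us)%E.

Definition sepd (h : X -> (X -> R) -> \bar R) x (z : X -> R) (t : R) (l1 : X -> R) y0 (al : R) :=
  forall u us r, dual_elt us -> (h u us <= r%:E)%E ->
      1 <= l1 (u - x) + (us y0 - z y0) + al * (r - t).

Lemma fin_cases (h : X -> (X -> R) -> \bar R) u us (P : \bar R -> Prop) :
  (forall r, (h u us <= r%:E)%E -> P r%:E) -> P +oo%E -> (h u us != -oo)%E -> P (h u us).
Proof. by case: (h u us) => [r| |] // H _ _; apply: H. Qed.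

Lemma dual_scale (f : X -> R) a v : dual_elt f -> f (a *: v) = a * f v.
Proof. by move=> df; rewrite (linfZ _ _ (dual_linf df)). Qed.

Lemma minor_pos h x z t l1 y0 al :
  (forall u us, dual_elt us -> (h u us != -oo)%E) -> dual_elt z ->
  dual_elt l1 -> 0 < al -> sepd h x z t l1 y0 al ->
  exists ys y c, minor h ys y c /\ t < ys x + z y - c.
Proof.
move=> hnn dz dl1 al0 hs.
have aln : al != 0 by rewrite gt_eqF.
pose ys := fun u => (- al^-1) * l1 u + 0 * l1 u.
pose y := (- al^-1) *: y0.
pose c := - (t + al^-1 + al^-1 * l1 x + al^-1 * z y0).
have dys : dual_elt ys by apply: dual_comb.
exists ys, y, c; split; last first.
  rewrite /ys /y /c (dual_scale _ _ dz).
  have : 0 < al^-1 by rewrite invr_gt0.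
  lra.
split => // u us dus.
apply: (@fin_cases h u us (fun e => ((ys u + us y - c)%:E <= e)%E)); last first.
- exact: hnn.
- by rewrite leey.
move=> r hr; rewrite lee_fin.
have := hs u us r dus hr.
rewrite (dual_sub _ _ dl1) /y (dual_scale _ _ dus) => H.
rewrite -(ler_pM2l al0).
have -> : al * (ys u + - al^-1 * us y0 - c) =
   al * t + 1 - l1 u + l1 x - us y0 + z y0.
  by rewrite /ys /c; field.
lra.
Qed.

Lemma minor_comb h x z t l1 y0 al ys0 y1 c0 :
  (forall u us, dual_elt us -> (h u us != -oo)%E) -> dual_elt z ->
  dual_elt l1 -> 0 <= al -> sepd h x z t l1 y0 al -> minor h ys0 y1 c0 ->
  exists ys y c, minor h ys y c /\ t < ys x + z y - c.
Proof.
move=> hnn dz dl1 al0 hs [dys0 hm0].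
pose A0 := ys0 x + z y1 - c0.
pose mu := maxr 0 (t - A0) + 1.
have mu1 : 0 <= maxr 0 (t - A0) by rewrite le_max lexx.
have mu2 : t - A0 <= maxr 0 (t - A0) by rewrite le_max lexx orbT.
have mu0 : 0 < mu by rewrite /mu; lra.
pose D := 1 + mu * al.
have D0 : 0 < D by rewrite /D; have := mulr_ge0 (ltW mu0) al0; lra.
have Dn : D != 0 by rewrite gt_eqF.
pose ys := fun u => D^-1 * ys0 u + (- (D^-1 * mu)) * l1 u.
pose y := D^-1 *: (y1 - mu *: y0).
pose c := D^-1 * (c0 - mu * al * t - mu - mu * l1 x - mu * z y0).
have dys : dual_elt ys by apply: dual_comb.
have yE : forall us, dual_elt us -> us y = D^-1 * (us y1 - mu * us y0).
  by move=> us dus; rewrite /y (dual_scale _ _ dus) (dual_sub _ _ dus) (dual_scale _ _ dus).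
exists ys, y, c; split; last first.
  rewrite (yE _ dz) -(ltr_pM2l D0).
  have -> : D * (ys x + D^-1 * (z y1 - mu * z y0) - c) = A0 + mu * al * t + mu.
    by rewrite /ys /c /A0; field.
  have -> : D * t = t + mu * al * t by rewrite /D; ring.
  rewrite /mu; lra.
split => // u us dus.
apply: (@fin_cases h u us (fun e => ((ys u + us y - c)%:E <= e)%E)); last first.
- exact: hnn.
- by rewrite leey.
move=> r hr; rewrite lee_fin.
have := hs u us r dus hr.
rewrite (dual_sub _ _ dl1) => H.
have := le_trans (hm0 u us dus) hr; rewrite lee_fin => H0.
rewrite (yE _ dus) -(ler_pM2l D0).
have -> : D * (ys u + D^-1 * (us y1 - mu * us y0) - c) =
   (ys0 u + us y1 - c0) + mu * (al * t + 1 - l1 u + l1 x - us y0 + z y0).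
  by rewrite /ys /c; field.
have -> : D * r = r + mu * (al * r) by rewrite /D; ring.
have : mu * (al * t + 1 - l1 u + l1 x - us y0 + z y0) <= mu * (al * r).
  by apply: ler_wpM2l; [exact: ltW|lra].
lra.
Qed.

End Minor.

Section MainSec.
Variables (R : realType) (X : normedModType R).

Lemma pair_nn (h : X -> (X -> R) -> \bar R) :
  (forall u us, dual_elt us -> ((us u)%:E <= h u us)%E) ->
  forall u us, dual_elt us -> (h u us != -oo)%E.
Proof.
move=> hge u us dus; have := hge u us dus.
by case: (h u us).
Qed.

Lemma minor_exists (h : X -> (X -> R) -> \bar R) x xs0 z (t : R) :
  convex_fn h -> lsc_strong_weakstar h ->
  (forall u us, dual_elt us -> ((us u)%:E <= h u us)%E) ->
  dual_elt xs0 -> (h x xs0 < +oo)%E -> dual_elt z -> (t%:E < h x z)%E ->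
  exists ys y c, minor h ys y c /\ t < ys x + z y - c.
Proof.
move=> cvx lsc hge d0 hx0 dz ht.
have hnn := pair_nn hge.
have [r0 hr0] : exists r0 : R, h x xs0 = r0%:E.
  move: (hnn x xs0 d0) hx0; case: (h x xs0) => [r| |] //; by exists r.
have ht0 : ((r0 - 1)%:E < h x xs0)%E by rewrite hr0 lte_fin; lra.
have [l1' [y0' [al' [dl1' al0' hs']]]] := sep_main cvx lsc d0 ht0.
have alp : 0 < al'.
  have hr0' : (h x xs0 <= r0%:E)%E by rewrite hr0.
  have := hs' x xs0 r0 d0 hr0'.
  rewrite subrr (linf0 (dual_linf dl1')) subrr; lra.
have [ys0 [y1 [c0 [hm0 _]]]] := minor_pos hnn d0 dl1' alp hs'.
have [l1 [y0 [al [dl1 al0 hs]]]] := sep_main cvx lsc dz ht.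
exact: (minor_comb hnn dz dl1 al0 hs hm0).
Qed.

Lemma dn_sym (f g : X -> R) : dual_norm (dsub f g) = dual_norm (dsub g f).
Proof.
rewrite /dual_norm; congr (sup _); apply/seteqP; split => _ [v hv <-];
  by exists v => //; rewrite /dsub distrC.
Qed.

Variable (T : set (X * (X -> R))).
Hypothesis mT : maximal_monotone T.

Lemma key_low (M : R) (h : X -> (X -> R) -> \bar R) x xs0 :
  0 <= M -> (forall a, domain T a -> `|a| <= M) ->
  fitz_family T h -> lsc_strong_weakstar h -> dual_elt xs0 -> (h x xs0 < +oo)%E ->
  forall z w (t : R), dual_elt z -> dual_elt w -> (t%:E < h x z)%E ->
  (((t - M * dual_norm (dsub z w))%:E <= h x w)%E).
Proof.
move=> M0 hD hf lsc d0 hx0 z w t dz dw ht.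
have [cvx [_ [hge heq]]] := hf.
have [ys [y [c [[dys hm] hv]]]] := minor_exists cvx lsc hge d0 hx0 dz ht.
have yM : `|y| <= M.
  apply: (core mT M0 hD dys (C := c)) => a as_ Ta.
  have [opT _] := mT.
  have := hm a as_ (opT _ Ta); rewrite heq // lee_fin; lra.
apply: le_trans (hm x w dw); rewrite lee_fin.
have dd : dual_elt (dsub z w) := dual_dsub dz dw.
have := dual_norm_ub y dd.
have dn0 := dual_norm_ge0 dd.
have : dual_norm (dsub z w) * `|y| <= dual_norm (dsub z w) * M by rewrite ler_wpM2l.
rewrite /dsub => h1 /ler_normlP [h2 h3].
have : M * dual_norm (fun y => z y - w y) = dual_norm (fun y => z y - w y) * M by rewrite mulrC.
lra.
Qed.

Lemma lim_aux (a b K : R) : (forall t, t < a -> t - K <= b) -> a - K <= b.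
Proof.
move=> H; rewrite leNgt; apply/negP => hc.
have h1 : (a + b + K) / 2 < a by lra.
have := H _ h1; lra.
Qed.

Lemma one_to_four : bounded_set (domain T) ->
  exists L : R, 0 <= L /\
    forall h, fitz_family T h -> lsc_strong_weakstar h -> real_lip L h.
Proof.
move=> /bounded_get [M [M0 hD]]; exists M; split => // h hf lsc x [xs0 [d0 hx0]].
have [cvx [_ [hge heq]]] := hf.
have hnn := pair_nn hge.
have fin : forall xs, dual_elt xs -> h x xs \is a fin_num.
  move=> xs dxs; rewrite fin_numE hnn //=.
  apply/negP => /eqP hinf.
  have [r0 hr0] : exists r0 : R, h x xs0 = r0%:E.
    move: (hnn x xs0 d0) hx0; case: (h x xs0) => [r| |] //; by exists r.
  have := key_low M0 hD hf lsc d0 hx0 dxs d0 (t := r0 + M * dual_norm (dsub xs xs0) + 1).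
  rewrite hinf hr0 lee_fin => /(_ (ltry _)); lra.
split => // xs zs dxs dzs.
have [a ha] : exists a : R, h x xs = a%:E.
  by move: (fin xs dxs); case: (h x xs) => [r| |] //; exists r.
have [b hb] : exists b : R, h x zs = b%:E.
  by move: (fin zs dzs); case: (h x zs) => [r| |] //; exists r.
rewrite ha hb -EFinB lee_fin.
have e1 : a - M * dual_norm (dsub xs zs) <= b.
  apply: lim_aux => t ta.
  have := key_low M0 hD hf lsc d0 hx0 dxs dzs (t := t); rewrite ha hb !lte_fin lee_fin.
  exact.
have e2 : b - M * dual_norm (dsub xs zs) <= a.
  rewrite dn_sym; apply: lim_aux => t tb.
  have := key_low M0 hD hf lsc d0 hx0 dzs dxs (t := t); rewrite ha hb !lte_fin lee_fin.
  exact.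
rewrite ler_norml; apply/andP; split; lra.
Qed.

Lemma dom_P1D (h : X -> (X -> R) -> \bar R) : fitz_family T h -> domain T `<=` P1D h.
Proof.
move=> [_ [_ [_ heq]]] a [as_ Ta]; have [opT _] := mT.
by exists as_; split; [exact: opT Ta|rewrite heq // ltry].
Qed.

Lemma five_to_one (h : X -> (X -> R) -> \bar R) (L : R) :
  fitz_family T h -> 0 <= L -> real_lip L h -> forall x, P1D h x -> `|x| <= L.
Proof.
move=> hf L0 hl x hx.
have [cvx [_ [hge heq]]] := hf.
have [fin lip] := hl x hx.
case: hx => xs0 [d0 _].
have [l [dl lx lb]] := norming x.
have [H0 hH0] : exists H0 : R, h x xs0 = H0%:E.
  by move: (fin xs0 d0); case: (h x xs0) => [r| |] //; exists r.
pose D0 := dual_norm xs0.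
have D00 : 0 <= D0 := dual_norm_ge0 d0.
have key : forall s, 0 <= s -> s * `|x| <= H0 + L * (s + D0).
  move=> s s0.
  pose w' := fun v => s * l v + 0 * xs0 v.
  have dw' : dual_elt w' by apply: dual_comb.
  have hw := hge x w' dw'.
  have [Hw hHw] : exists Hw : R, h x w' = Hw%:E.
    by move: (fin w' dw'); case: (h x w') => [r| |] //; exists r.
  have := lip w' xs0 dw' d0; rewrite hHw hH0 -EFinB lee_fin => hlip.
  have hw' : s * `|x| <= Hw.
    by move: hw; rewrite hHw lee_fin /w' lx mul0r addr0.
  have dnb : dual_norm (dsub w' xs0) <= s + D0.
    apply: dual_norm_le => v v1; rewrite /dsub /w' mul0r addr0.
    have e1 : `|s * l v| <= s.
      rewrite normrM ger0_norm //; rewrite -[leRHS]mulr1; apply: ler_wpM2l => //.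
      exact: le_trans (lb v) v1.
    have e2 : `|xs0 v| <= D0.
      apply: le_trans (dual_norm_ub v d0) _; rewrite -[leRHS]mulr1.
      by apply: ler_wpM2l.
    apply: le_trans (ler_normB _ _) _; lra.
  have : L * dual_norm (dsub w' xs0) <= L * (s + D0) by apply: ler_wpM2l.
  move: hlip; rewrite ler_norml => /andP[_ hl2]; lra.
rewrite leNgt; apply/negP => xL.
have dpos : 0 < `|x| - L by lra.
pose q := (H0 + L * D0 + 1) / (`|x| - L).
pose s := maxr 0 q.
have s0 : 0 <= s by rewrite le_max lexx.
have sq : q <= s by rewrite le_max lexx orbT.
have : q * (`|x| - L) <= s * (`|x| - L) by apply: ler_wpM2r => //; exact: ltW.
have -> : q * (`|x| - L) = H0 + L * D0 + 1 by rewrite /q mulfVK // gt_eqF.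
have := key s s0.
have -> : s * (`|x| - L) = s * `|x| - L * s by ring.
lra.
Qed.

End MainSec.

Theorem lemma4p5 (R : realType) (X : completeNormedModType R)
  (T : set (X * (X -> R))) :
  maximal_monotone T ->
  [<-> bounded_set (domain T);
       (forall h, fitz_family T h -> bounded_set (P1D h));
       (exists h, fitz_family T h /\ bounded_set (P1D h));
       (exists L : R, 0 <= L /\
          forall h, fitz_family T h -> lsc_strong_weakstar h -> real_lip L h);
       (exists h, fitz_family T h /\ lsc_strong_weakstar h /\
          exists L : R, 0 <= L /\ real_lip L h)].
Proof.
move=> mT; have [opT _] := mT; tfae.
- move=> /bounded_get [M [M0 hD]] h hf.
  apply: (@bounded_of _ _ _ M) => x [xs0 [d0 hx0]].
  have [_ [_ [hge _]]] := hf.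
  have [r0 hr0] : exists r0 : R, h x xs0 = r0%:E.
    move: (@pair_nn _ _ h hge x xs0 d0) hx0; case: (h x xs0) => [r| |] //; by exists r.
  have hr : (h x xs0 <= r0%:E)%E by rewrite hr0.
  apply: (core mT M0 hD d0 (C := r0)) => a as_ Ta.
  exact: (fitz_bound hf d0 hr Ta opT).
- move=> H2; exists (phiT T); split; [exact: phi_fitz mT | exact: H2 _ (phi_fitz mT)].
- move=> [h [hf hb]]; apply: one_to_four => //.
  have [M [_ hM]] := bounded_get hb.
  apply: (@bounded_of _ _ _ M) => a Da; exact: hM _ (dom_P1D mT hf Da).
- move=> [L [L0 H]]; exists (phiT T); split; first exact: phi_fitz mT.
  split; first exact: phi_weak mT.
  by exists L; split => //; apply: H; [exact: phi_fitz mT|exact: phi_weak mT].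
- move=> [h [hf [_ [L [L0 hl]]]]].
  apply: (@bounded_of _ _ _ L) => a Da.
  apply: (five_to_one hf L0 hl); exact: (dom_P1D mT hf).
Qed.
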